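(* Let $A$ be a bounded convex subset of $\mathbb R^2$ with non-empty interior, let $k,\ell\in\mathbb N$, and assume that the scaled grid problem over $\mathbb Z[i]$ for $A$ and $\sqrt2^{\,k}\sqrt5^{\,\ell}$ has at least two distinct solutions. Then for all $j\ge 0$, the scaled grid problem over $\mathbb Z[i]$ for $A$ and $\sqrt2^{\,k}\sqrt5^{\,\ell+2j}$ has at least $5^j+1$ solutions.
   Context: $\mathbb Z[i]$ is identified with $\mathbb Z^2\subseteq\mathbb R^2$. For a nonzero real $r$, a solution of the scaled grid problem over $\mathbb Z[i]$ for $A$ and $r$ is a point of $(rA)\cap\mathbb Z[i]$, where $rA=\{rv: v\in A\}$. *)

(* Defs.v *)
(* concrete reals R; R^2 is R * R, Z[i] is identified with Z * Z. *)
From Stdlib Require Import Reals ZArith List.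
Open Scope R_scope.

Definition pt := (R * R)%type.

Definition convex_set (A : pt -> Prop) : Prop :=
  forall p q : pt, A p -> A q -> forall t : R, 0 <= t <= 1 ->
    A (t * fst p + (1 - t) * fst q, t * snd p + (1 - t) * snd q).

Definition bounded_set (A : pt -> Prop) : Prop :=
  exists M : R, forall p : pt, A p -> Rabs (fst p) <= M /\ Rabs (snd p) <= M.

Definition nonempty_interior (A : pt -> Prop) : Prop :=
  exists (c : pt) (eps : R), 0 < eps /\
    forall p : pt, (fst p - fst c) ^ 2 + (snd p - snd c) ^ 2 < eps ^ 2 -> A p.

Definition scale_set (r : R) (A : pt -> Prop) : pt -> Prop :=
  fun p => exists v : pt, A v /\ p = (r * fst v, r * snd v).

Definition grid_solution (A : pt -> Prop) (r : R) (z : Z * Z) : Prop :=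
  scale_set r A (IZR (fst z), IZR (snd z)).

(* Main.v *)
Require Import Defs.
From Stdlib Require Import Reals ZArith List Lra Lia FinFun.
Open Scope R_scope.

Lemma sqrt5_pow (l j : nat) :
  sqrt 5 ^ (l + 2 * j) = sqrt 5 ^ l * INR (5 ^ j).
Proof.
  rewrite pow_add, pow_mult, pow2_sqrt; [|lra].
  rewrite pow_INR. replace (INR 5) with 5 by (simpl; ring). reflexivity.
Qed.

Theorem proposition5p19 (A : pt -> Prop) (k l : nat) :
  bounded_set A -> convex_set A -> nonempty_interior A ->
  (exists z1 z2 : Z * Z, z1 <> z2 /\
     grid_solution A (sqrt 2 ^ k * sqrt 5 ^ l) z1 /\
     grid_solution A (sqrt 2 ^ k * sqrt 5 ^ l) z2) ->
  forall j : nat, exists sols : list (Z * Z),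
    NoDup sols /\ (5 ^ j + 1 <= length sols)%nat /\
    Forall (grid_solution A (sqrt 2 ^ k * sqrt 5 ^ (l + 2 * j))) sols.
Proof.
  intros _ Hc _ [[x1 y1] [[x2 y2] [Hne [[v1 [Hv1 E1]] [v2 [Hv2 E2]]]]]] j.
  simpl in E1, E2. injection E1 as E1x E1y. injection E2 as E2x E2y.
  set (N := (5 ^ j)%nat).
  assert (HN : INR N <> 0).
  { apply not_0_INR. unfold N. apply Nat.pow_nonzero. lia. }
  set (f := fun t : nat => (Z.of_nat N * x1 + Z.of_nat t * (x2 - x1),
                             Z.of_nat N * y1 + Z.of_nat t * (y2 - y1))%Z).
  exists (map f (seq 0 (N + 1))).
  split; [|split].
  - apply Injective_map_NoDup; [|apply seq_NoDup].
    intros a b Hab. unfold f in Hab. injection Hab as Ha Hb.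
    destruct (Z.eq_dec x1 x2) as [ex|nx].
    + destruct (Z.eq_dec y1 y2) as [ey|ny].
      * subst. exfalso; apply Hne; reflexivity.
      * assert (Z.of_nat a * (y2 - y1) = Z.of_nat b * (y2 - y1))%Z by lia.
        apply Z.mul_cancel_r in H; lia.
    + assert (Z.of_nat a * (x2 - x1) = Z.of_nat b * (x2 - x1))%Z by lia.
      apply Z.mul_cancel_r in H; lia.
  - rewrite length_map, length_seq. unfold N. lia.
  - apply Forall_forall. intros z Hz. apply in_map_iff in Hz.
    destruct Hz as [t [<- Ht]]. apply in_seq in Ht.
    assert (HtN : (t <= N)%nat) by lia.
    apply le_INR in HtN.
    assert (H0t : 0 <= INR t) by apply pos_INR.
    set (s := INR t / INR N).
    assert (HNp : 0 < INR N) by (pose proof (pos_INR N); lra).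
    assert (Hs : 0 <= 1 - s <= 1).
    { unfold s. split.
      - assert (INR t / INR N <= 1); [|lra].
        apply (Rmult_le_reg_r (INR N)); [lra|].
        unfold Rdiv; rewrite Rmult_assoc, Rinv_l; lra.
      - assert (0 <= INR t / INR N) by (unfold Rdiv; apply Rmult_le_pos; [lra|left; apply Rinv_0_lt_compat; lra]). lra. }
    pose proof (Hc v1 v2 Hv1 Hv2 (1 - s) Hs) as HA.
    eexists; split; [exact HA|].
    unfold f. destruct v1 as [a1 b1], v2 as [a2 b2]. cbn [fst snd] in *. rewrite sqrt5_pow. fold N.
    rewrite !plus_IZR, !mult_IZR, !minus_IZR, <- !INR_IZR_INZ.
    rewrite E1x, E1y, E2x, E2y. unfold s. f_equal. all: field; auto.
Qed.
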